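(* Let $b\in\mathbb{Z}$ and let $q\ge 0$ be an integer. For $k\in\mathbb{N}$ and $z\in\mathbb{Z}$ let $F_{k,z}$ and $G_{k,z}$ be distribution functions of probability distributions supported on the nonnegative integers. Let $(S_k)_{k\ge0}$ and $(T_k)_{k\ge0}$ be integer-valued processes with $S_0=T_0=b$, $$S_{k+1}=S_k+X_k-q,\qquad T_{k+1}=T_k+Y_k-q,$$ where, conditionally on $S_0,\dots,S_k$, the variable $X_k$ has distribution function $F_{k,S_k}$, and conditionally on $T_0,\dots,T_k$, the variable $Y_k$ has distribution function $G_{k,T_k}$. Assume: (1) for all $k\in\mathbb{N}$, $z\in\mathbb{Z}$, $l\in\mathbb{R}$: $G_{k,z}(l)\le G_{k,z-1}(l+1)$; (2) there is an integer $M\ge b$ such that for all $k\in\mathbb N$ and all integers $z\le M-kq$, $F_{k,z}\succ G_{k,z}$. Then for every $n\ge1$ and every integers $l_1,\dots,l_n$ with $l_k\le M-kq$ for all $k$, $$\Pr[S_1>l_1,S_2>l_2,\dots,S_n>l_n]\ \ge\ \Pr[T_1>l_1,T_2>l_2,\dots,T_n>l_n].$$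
   Context: For distribution functions $F,G$ on $\mathbb{R}$, $F\succ G$ means $F(t)\le G(t)$ for all $t\in\mathbb{R}$ (i.e. $F$ stochastically dominates $G$). *)

(* Defs.v *)
From Stdlib Require Import Reals ZArith ClassicalEpsilon.
Open Scope R_scope.

(* Value of a convergent real series (the limit of its partial sums);
   chosen by classical choice, only meaningful when the series converges. *)
Definition sumR (f : nat -> R) : R :=
  epsilon (inhabits 0) (fun s => infinite_sum f s).

Definition is_pmf (p : nat -> R) : Prop :=
  (forall x, 0 <= p x) /\ infinite_sum p 1.

Definition cdf (p : nat -> R) (t : R) : R :=
  sumR (fun x => if Rle_dec (INR x) t then p x else 0).

(* Chain S_{k+1} = S_k + X_k - q, where given the past X_k has pmf P k S_k.
   surv P q l m k z = Pr[S_{k+1} > l (k+1), ..., S_{k+m} > l (k+m) | S_k = z]. *)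
Fixpoint surv (P : nat -> Z -> nat -> R) (q : Z) (l : nat -> Z)
    (m k : nat) (z : Z) : R :=
  match m with
  | O => 1
  | S m' =>
      sumR (fun x =>
        let z' := (z + Z.of_nat x - q)%Z in
        P k z x * (if Z.ltb (l (S k)) z' then surv P q l m' (S k) z' else 0))
  end.

Definition prob_all_above (P : nat -> Z -> nat -> R) (q b : Z) (l : nat -> Z)
    (n : nat) : R :=
  surv P q l n 0 b.

(* Main.v *)
Require Import Defs.
From Stdlib Require Import Reals ZArith Lra Lia Psatz ClassicalEpsilon FunctionalExtensionality.
Open Scope R_scope.

Lemma sumR_eq f s : infinite_sum f s -> sumR f = s.
Proof.
  intro H. unfold sumR.
  assert (E := epsilon_spec (inhabits 0) (fun s => infinite_sum f s) (ex_intro _ s H)).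
  apply (uniqueness_sum f); auto.
Qed.

Lemma cv_const c : Un_cv (fun _ => c) c.
Proof. intros e he. exists 0%nat. intros. unfold Rdist. rewrite Rminus_diag, Rabs_R0. lra. Qed.

Lemma sum_le_lim f g A B : infinite_sum f A -> infinite_sum g B ->
  (forall x, f x <= g x) -> A <= B.
Proof.
  intros HA HB Hle. refine (@Rle_cv_lim (fun N => sum_f_R0 f N) (fun N => sum_f_R0 g N) A B _ HA HB).
  intro n. apply sum_Rle. intros; auto.
Qed.

Lemma conv_bounded p h : (forall x, 0 <= p x) -> infinite_sum p 1 ->
  (forall x, 0 <= h x <= 1) ->
  exists A, infinite_sum (fun x => p x * h x) A /\ 0 <= A <= 1.
Proof.
  intros Hp H1 Hh.
  destruct (Rseries_CV_comp (fun x => p x * h x) p) as [A HA].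
  - intro n. specialize (Hp n). specialize (Hh n). split; nra.
  - exists 1. exact H1.
  - exists A. split; [exact HA|]. split.
    + apply (sum_le_lim (fun _ => 0) (fun x => p x * h x)); auto.
      * intros e he. exists 0%nat. intros n _. rewrite sum_cte. unfold Rdist.
        replace (0 * INR (S n) - 0) with 0 by ring. rewrite Rabs_R0; lra.
      * intro x. specialize (Hp x). specialize (Hh x). nra.
    + apply (sum_le_lim (fun x => p x * h x) p); auto.
      intro x. specialize (Hp x). specialize (Hh x). nra.
Qed.

Lemma cdf_INR p m : cdf p (INR m) = sum_f_R0 p m.
Proof.
  unfold cdf. apply sumR_eq.
  set (g := fun x => if Rle_dec (INR x) (INR m) then p x else 0).
  assert (Hk : forall k, sum_f_R0 g (m + k) = sum_f_R0 p m).
  { induction k.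
    - rewrite Nat.add_0_r. apply sum_eq. intros i Hi. unfold g.
      destruct (Rle_dec (INR i) (INR m)) as [|n]; auto. exfalso; apply n, le_INR; lia.
    - rewrite Nat.add_succ_r. simpl. rewrite IHk. unfold g.
      destruct (Rle_dec (INR (S (m+k))) (INR m)) as [r|]; [|ring].
      apply INR_le in r. lia. }
  intros e he. exists m. intros n Hn. replace n with (m + (n - m))%nat by lia.
  rewrite Hk. unfold Rdist. rewrite Rminus_diag, Rabs_R0. lra.
Qed.

Definition shift (f : nat -> R) (x : nat) : R :=
  match x with O => 0 | S y => f y end.

Lemma shift_sum f N : sum_f_R0 (shift f) (S N) = sum_f_R0 f N.
Proof. induction N; simpl in *; [ring|]. rewrite <- IHN. simpl. ring. Qed.

Lemma shift_inf f s : infinite_sum f s -> infinite_sum (shift f) s.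
Proof.
  intros H e he. destruct (H e he) as [N HN]. exists (S N). intros n Hn.
  destruct n; [lia|]. rewrite shift_sum. apply HN. lia.
Qed.

Lemma dom p r h A B : infinite_sum p 1 -> infinite_sum r 1 ->
  (forall N, sum_f_R0 p N <= sum_f_R0 r N) ->
  (forall x, h x <= h (S x)) -> (forall x, 0 <= h x <= 1) ->
  infinite_sum (fun x => p x * h x) A -> infinite_sum (fun x => r x * h x) B ->
  B <= A.
Proof.
  intros Hp Hr Hc Hm Hb HA HB.
  assert (Cl : forall N, sum_f_R0 (fun x => p x * h x) N - sum_f_R0 (fun x => r x * h x) N
     >= (sum_f_R0 p N - sum_f_R0 r N) * h N).
  { induction N; simpl; [lra|].
    specialize (Hc N). specialize (Hm N).
    assert ((sum_f_R0 p N - sum_f_R0 r N) * (h (S N) - h N) <= 0) by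
      nra.
    nra. }
  assert (1 - 1 <= A - B).
  { refine (@Rle_cv_lim (fun N => sum_f_R0 p N - sum_f_R0 r N)
      (fun N => sum_f_R0 (fun x => p x * h x) N - sum_f_R0 (fun x => r x * h x) N) _ _ _ _ _).
    - intro n. specialize (Cl n). specialize (Hc n). specialize (Hb n).
      assert ((sum_f_R0 p n - sum_f_R0 r n) * (1 - h n) <= 0) by
        nra. nra.
    - apply CV_minus; auto.
    - apply CV_minus; auto. }
  lra.
Qed.

Definition Hf P q l m k w : R :=
  if Z.ltb (l (S k)) w then surv P q l m (S k) w else 0.

Lemma surv_S P q l m k z : surv P q l (S m) k z =
  sumR (fun x => P k z x * Hf P q l m k (z + Z.of_nat x - q)%Z).
Proof. reflexivity. Qed.

Lemma surv_bounds P q l (hP : forall k z, is_pmf (P k z)) :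
  forall m k z, 0 <= surv P q l m k z <= 1.
Proof.
  induction m; intros k z; [simpl; lra|].
  rewrite surv_S.
  destruct (hP k z) as [H0 H1].
  destruct (conv_bounded (P k z) (fun x => Hf P q l m k (z + Z.of_nat x - q)%Z) H0 H1)
    as [A [HA HAb]].
  - intro x. unfold Hf. destruct Z.ltb; auto. lra.
  - rewrite (sumR_eq _ _ HA). auto.
Qed.

Lemma Hf_bounds P q l (hP : forall k z, is_pmf (P k z)) m k w :
  0 <= Hf P q l m k w <= 1.
Proof. unfold Hf. destruct Z.ltb; [apply surv_bounds; auto|lra]. Qed.

Lemma Zsk k q : (Z.of_nat (S k) * q = Z.of_nat k * q + q)%Z.
Proof. rewrite Nat2Z.inj_succ, Z.mul_succ_l. reflexivity. Qed.

Lemma above P q l M (hP : forall k z, is_pmf (P k z)) (hq : (0 <= q)%Z) :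
  forall m k z, (forall j, (k < j <= k + m)%nat -> (l j <= M - Z.of_nat j * q)%Z) ->
  (M - Z.of_nat k * q < z)%Z -> surv P q l m k z = 1.
Proof.
  induction m; intros k z Hl Hz; [reflexivity|].
  rewrite surv_S.
  replace (fun x => P k z x * Hf P q l m k (z + Z.of_nat x - q)%Z) with (P k z).
  - apply sumR_eq. apply hP.
  - apply functional_extensionality. intro x. unfold Hf.
    assert (Hj := Hl (S k) ltac:(lia)). rewrite Zsk in Hj.
    assert (Hlt : (l (S k) <? z + Z.of_nat x - q)%Z = true) by (apply Z.ltb_lt; lia).
    rewrite Hlt. rewrite IHm; [ring| |].
    + intros j Hj'. apply Hl. lia.
    + rewrite Zsk. lia.
Qed.

Lemma G_mono q l (G : nat -> Z -> nat -> R) (hG : forall k z, is_pmf (G k z))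
  (h1 : forall (k : nat) (z : Z) (t : R), cdf (G k z) t <= cdf (G k (z - 1)%Z) (t + 1)) :
  forall m k z, surv G q l m k z <= surv G q l m k (z + 1).
Proof.
  induction m; intros k z; [simpl; lra|].
  assert (HM : forall w, Hf G q l m k w <= Hf G q l m k (w + 1)).
  { intro w. unfold Hf. destruct (Z.ltb (l (S k)) w) eqn:E.
    - apply Z.ltb_lt in E. assert (E' : (l (S k) <? w + 1)%Z = true) by (apply Z.ltb_lt; lia).
      rewrite E'. apply IHm.
    - assert (Bd := Hf_bounds G q l hG m k (w+1)); unfold Hf in Bd; lra. }
  rewrite !surv_S.
  set (h := fun x => Hf G q l m k (z + Z.of_nat x - q)%Z).
  destruct (hG k z) as [H0 H1]. destruct (hG k (z+1)%Z) as [H0' H1'].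
  destruct (conv_bounded (G k z) h H0 H1) as [A [HA _]].
  { intro; apply Hf_bounds; auto. }
  destruct (conv_bounded (G k (z+1)%Z) (fun x => Hf G q l m k (z + 1 + Z.of_nat x - q)%Z) H0' H1')
    as [B [HB _]].
  { intro; apply Hf_bounds; auto. }
  assert (HA' := HA); unfold h in HA'; cbv beta in HA'.
  rewrite (sumR_eq _ _ HA'), (sumR_eq _ _ HB).
  apply (dom (shift (G k (z+1)%Z)) (G k z) h B A).
  - apply shift_inf; auto.
  - auto.
  - intro N. destruct N.
    + simpl. apply H0.
    + rewrite shift_sum, <- !cdf_INR.
      replace (INR (S N)) with (INR N + 1) by (rewrite S_INR; ring).
      specialize (h1 k (z+1)%Z (INR N)). replace (z + 1 - 1)%Z with z in h1 by ring.
      exact h1.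
  - intro x. unfold h. replace (z + Z.of_nat (S x) - q)%Z with ((z + Z.of_nat x - q) + 1)%Z by lia.
    apply HM.
  - intro; apply Hf_bounds; auto.
  - apply shift_inf in HB.
    replace (fun x => shift (G k (z + 1)%Z) x * h x) with
      (shift (fun x => G k (z + 1)%Z x * Hf G q l m k (z + 1 + Z.of_nat x - q)%Z)); auto.
    apply functional_extensionality. intros [|y]; simpl; [ring|].
    unfold h. replace (z + Z.of_nat (S y) - q)%Z with (z + 1 + Z.of_nat y - q)%Z by lia.
    reflexivity.
  - exact HA.
Qed.

Theorem lemma2 (b q : Z) (Fp Gp : nat -> Z -> nat -> R) (M : Z)
  (hq : (0 <= q)%Z)
  (hF : forall (k : nat) (z : Z), is_pmf (Fp k z))
  (hG : forall (k : nat) (z : Z), is_pmf (Gp k z))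
  (h1 : forall (k : nat) (z : Z) (t : R),
      cdf (Gp k z) t <= cdf (Gp k (z - 1)%Z) (t + 1))
  (hMb : (b <= M)%Z)
  (h2 : forall (k : nat) (z : Z), (z <= M - Z.of_nat k * q)%Z ->
      forall t : R, cdf (Fp k z) t <= cdf (Gp k z) t)
  (n : nat) (hn : (1 <= n)%nat) (l : nat -> Z)
  (hl : forall k : nat, (1 <= k <= n)%nat -> (l k <= M - Z.of_nat k * q)%Z) :
  prob_all_above Fp q b l n >= prob_all_above Gp q b l n.
Proof.
  assert (Main : forall m k z, (forall j, (k < j <= k + m)%nat -> (l j <= M - Z.of_nat j * q)%Z) ->
     surv Gp q l m k z <= surv Fp q l m k z).
  { induction m; intros k z Hl; [simpl; lra|].
    destruct (Z_le_gt_dec z (M - Z.of_nat k * q)) as [Hz|Hz].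
    - rewrite !surv_S.
      destruct (hF k z) as [H0 H1]. destruct (hG k z) as [H0' H1'].
      set (hg := fun x => Hf Gp q l m k (z + Z.of_nat x - q)%Z).
      set (hf := fun x => Hf Fp q l m k (z + Z.of_nat x - q)%Z).
      destruct (conv_bounded (Fp k z) hf H0 H1) as [A [HA _]].
      { intro; apply Hf_bounds; auto. }
      destruct (conv_bounded (Fp k z) hg H0 H1) as [C [HC _]].
      { intro; apply Hf_bounds; auto. }
      destruct (conv_bounded (Gp k z) hg H0' H1') as [B [HB _]].
      { intro; apply Hf_bounds; auto. }
      assert (HA' := HA); unfold hf in HA'; cbv beta in HA'.
      assert (HB' := HB); unfold hg in HB'; cbv beta in HB'.
      rewrite (sumR_eq _ _ HA'), (sumR_eq _ _ HB').
      apply Rle_trans with C.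
      + apply (dom (Fp k z) (Gp k z) hg C B); auto.
        * intro N. rewrite <- !cdf_INR. apply h2; auto.
        * intro x. unfold hg. replace (z + Z.of_nat (S x) - q)%Z with ((z + Z.of_nat x - q) + 1)%Z by lia.
          unfold Hf. destruct (Z.ltb (l (S k)) (z + Z.of_nat x - q)) eqn:E.
          -- apply Z.ltb_lt in E.
             assert (E' : (l (S k) <? z + Z.of_nat x - q + 1)%Z = true) by (apply Z.ltb_lt; lia).
             rewrite E'. apply G_mono; auto.
          -- assert (Bd := Hf_bounds Gp q l hG m k (z + Z.of_nat x - q + 1)); unfold Hf in Bd; lra.
        * intro; apply Hf_bounds; auto.
      + apply (sum_le_lim _ _ _ _ HC HA). intro x. apply Rmult_le_compat_l; auto.
        unfold hg, hf, Hf. destruct Z.ltb; [|lra]. apply IHm. intros j Hj; apply Hl; lia.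
    - rewrite (above Fp q l M hF hq); auto; [|lia]. apply surv_bounds; auto. }
  unfold prob_all_above. apply Rle_ge. apply Main. intros j Hj. apply hl. lia.
Qed.
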